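(* Let $\beta\in\mathbb{Z}[\mathrm{i}]$ with $|\beta|>1$ and let $D\subset\mathbb{Z}[\mathrm{i}]$ be finite. Let $w_1,w_2,w_3\in D^*$ with $w_2$ non-empty, and suppose $[w_1]_\beta\,(1-\beta^{|w_2|})\neq[w_2]_\beta$. For $j\ge0$ put $u_j=[w_1w_2^jw_3]_\beta$, where $w_2^j$ denotes $w_2$ concatenated $j$ times. If there exist integers $k\ge0$ and $\ell\ge1$ such that $u_k,u_{k+\ell},u_{k+2\ell}$ lie on a common line in $\mathbb{C}$, then $\beta$ is a root of an integer, i.e. $\beta^N\in\mathbb{Z}$ for some integer $N\ge1$.
   Context: For a word $w=w_{n-1}\cdots w_0$ over $D$, $[w]_\beta=\sum_{j=0}^{n-1}w_j\beta^j$ ($w_0$ least significant) and $|w|=n$ is its length. *)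

(* Defs.v *)
From HB Require Import structures.
From mathcomp Require Import all_boot all_order all_algebra all_field.
Set Implicit Arguments. Unset Strict Implicit. Unset Printing Implicit Defensive.
Import Order.TTheory GRing.Theory Num.Theory.
Local Open Scope ring_scope.

(* Complex numbers are modelled by the algebraic complex numbers algC
   (every Gaussian integer, and every value [w]_beta, lies in algC). *)

Definition gaussInt (x : algC) : bool :=
  ('Re x \in Num.int) && ('Im x \in Num.int).

(* A word w = w_{n-1} ... w_0 is the list [:: w_{n-1}; ...; w_0] (written
   left to right), so concatenation of words is list concatenation (++),
   and w_0 is the LAST entry of the list. *)
Definition wordval (beta : algC) (w : seq algC) : algC :=
  \sum_(j < size w) (nth 0 (rev w) j) * beta ^+ j.

Definition wpow (w : seq algC) (j : nat) : seq algC := flatten (nseq j w).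

Definition collinear3 (a b c : algC) : Prop :=
  exists p d : algC, d != 0 /\
    (exists ta, ta \is Num.real /\ a = p + ta * d) /\
    (exists tb, tb \is Num.real /\ b = p + tb * d) /\
    (exists tc, tc \is Num.real /\ c = p + tc * d).

(* Main.v *)
Require Import Defs.
From HB Require Import structures.
From mathcomp Require Import all_boot all_order all_algebra all_field.
From mathcomp Require Import ring.
Import Order.TTheory GRing.Theory Num.Theory.
Local Open Scope ring_scope.

Section Aux.
Variable beta : algC.
Definition hf (a x : algC) := a * beta + x.

Lemma hornerA acc w : foldl hf acc w = acc * beta ^+ size w + foldl hf 0 w.
Proof.
elim: w acc => [|x w IH] acc /=; first by rewrite expr0 mulr1 addr0.
rewrite IH [foldl hf (hf 0 x) w]IH /hf exprS; ring.
Qed.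

Lemma wordvalE w : wordval beta w = foldl hf 0 w.
Proof.
elim/last_ind: w => [|w x IH]; first by rewrite /wordval big_ord0.
rewrite foldl_rcons -IH /wordval rev_rcons size_rcons big_ord_recl /=.
rewrite expr0 mulr1 /hf addrC; congr (_ + _).
rewrite big_distrl /=; apply: eq_bigr => i _.
by rewrite /bump /= add1n exprS; ring.
Qed.

Lemma wordval_cat u v :
  wordval beta (u ++ v) = wordval beta u * beta ^+ size v + wordval beta v.
Proof. by rewrite !wordvalE foldl_cat hornerA. Qed.

Lemma size_wpow w j : size (wpow w j) = (j * size w)%N.
Proof.
elim: j => [|j IH] //=; rewrite /wpow /= size_cat.
by rewrite -/(wpow w j) IH mulSn.
Qed.

Lemma wordval_wpow w j :
  (beta ^+ size w - 1) * wordval beta (wpow w j) =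
  wordval beta w * ((beta ^+ size w) ^+ j - 1).
Proof.
elim: j => [|j IH].
  by rewrite /wpow /= /wordval big_ord0 expr0 subrr !mulr0.
rewrite [wpow w j.+1]/wpow /= -/(wpow w j) wordval_cat mulrDr IH.
rewrite size_wpow mulnC exprM exprS; ring.
Qed.

Lemma gauss_pow N : gaussInt beta ->
  exists a b, a \in Num.int /\ b \in Num.int /\ beta ^+ N = a + 'i * b.
Proof.
move=> /andP[hr hi]; elim: N => [|N [a [b [ha [hb he]]]]].
  by exists 1, 0; rewrite expr0 mulr0 addr0 !rpred0 rpred1.
exists (a * 'Re beta - b * 'Im beta), (a * 'Im beta + 'Re beta * b).
rewrite rpredB ?rpredD ?rpredM // exprSr he.
split => //; split => //.
transitivity ((a + 'i * b) * ('Re beta + 'i * 'Im beta)); first by rewrite -Crect.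
by rewrite mulC_rect.
Qed.
End Aux.

Theorem lemma3p3 (beta : algC) (D : seq algC) (w1 w2 w3 : seq algC) :
  gaussInt beta -> 1 < `|beta| ->
  all gaussInt D ->
  all (mem D) w1 -> all (mem D) w2 -> all (mem D) w3 ->
  w2 != [::] ->
  wordval beta w1 * (1 - beta ^+ size w2) != wordval beta w2 ->
  (exists k l : nat, (1 <= l)%N /\
     collinear3 (wordval beta (w1 ++ wpow w2 k ++ w3))
                (wordval beta (w1 ++ wpow w2 (k + l) ++ w3))
                (wordval beta (w1 ++ wpow w2 (k + 2 * l) ++ w3))) ->
  exists N : nat, (1 <= N)%N /\ beta ^+ N \in Num.int.
Proof.
move=> gb b1 _ _ _ _ w2n hE [k [l [l1 [p [d [d0 [[ta [ra ea]] [[tb [rb eb]] [tc [rc ec]]]]]]]]]].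
set n := size w2.
have n1 : (0 < n)%N by rewrite lt0n size_eq0.
set q := beta ^+ n.
set X := wordval beta w1. set W := wordval beta w2. set Y := wordval beta w3.
set m := size w3. set b := beta ^+ m.
set E := X * (q - 1) + W.
have E0 : E != 0.
  apply: contra hE => /eqP h; apply/eqP.
  have h' : X * (q - 1) + W = 0 := h.
  apply: (addrI (X * (q - 1))); rewrite h' -/X -/n -/q; ring.
have pgt1 j : (0 < j)%N -> beta ^+ j != 1.
  move=> j0; apply/eqP => h.
  have : 1 < `|beta ^+ j| by rewrite normrX exprn_egt1 // -lt0n.
  by rewrite h normr1 ltxx.
have beta0 : beta != 0 by apply: contraTneq b1 => ->; rewrite normr0 ltr10.
have q1 : q - 1 != 0 by rewrite subr_eq0 pgt1.
have key j : (q - 1) * wordval beta (w1 ++ wpow w2 j ++ w3) =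
    b * q ^+ j * E + (q - 1) * Y - b * W.
  rewrite !wordval_cat size_cat size_wpow -/X -/Y -/m -/b.
  have hV := wordval_wpow beta w2 j; rewrite -/n -/q -/W in hV.
  rewrite exprD -/b mulnC exprM -/q /E.
  transitivity (X * (q - 1) * q ^+ j * b + ((q - 1) * wordval beta (wpow w2 j)) * b + (q - 1) * Y); first ring.
  rewrite hV; ring.
set r := q ^+ l.
have r1 : r - 1 != 0.
  by rewrite subr_eq0 /r /q -exprM pgt1 // muln_gt0 n1.
set K := b * q ^+ k * E.
have K0 : K != 0 by rewrite !mulf_neq0 // ?expf_neq0 //.
have hab : (q - 1) * ((tb - ta) * d) = K * (r - 1).
  have -> : (tb - ta) * d = wordval beta (w1 ++ wpow w2 (k + l) ++ w3) - wordval beta (w1 ++ wpow w2 k ++ w3) by rewrite eb ea; ring.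
  rewrite mulrBr !key exprD /K /r; ring.
have hac : (q - 1) * ((tc - ta) * d) = K * (r - 1) * (r + 1).
  have -> : (tc - ta) * d = wordval beta (w1 ++ wpow w2 (k + 2 * l) ++ w3) - wordval beta (w1 ++ wpow w2 k ++ w3) by rewrite ec ea; ring.
  rewrite mulrBr !key exprD mulnC exprM /K /r; ring.
have s0 : tb - ta != 0.
  apply: contra (mulf_neq0 K0 r1) => /eqP h; by rewrite -hab h mul0r mulr0.
have ht : tc - ta = (tb - ta) * (r + 1).
  apply: (mulfI (mulf_neq0 q1 d0)).
  transitivity ((q - 1) * ((tc - ta) * d)); first ring.
  rewrite hac -hab; ring.
have rr : r \is Num.real.
  have -> : r = (tc - ta) / (tb - ta) - 1 by rewrite ht mulrC mulKf // addrK.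
  by rewrite rpredB ?rpred1 // rpredM ?rpredV // rpredB.
exists (n * l)%N; split; first by rewrite muln_gt0 n1.
have [a [c [ha [hc he]]]] := gauss_pow beta (n * l)%N gb.
have rE : r = beta ^+ (n * l).
  rewrite /r /q -exprM. reflexivity.
move: rr; rewrite rE he => /Creal_ImP.
rewrite Im_rect ?Rreal_int // => c0.
rewrite c0 mulr0 addr0; exact: ha.
Qed.
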